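(* Let $k$ and $n$ be sufficiently large and let $\Phi$ be a $k$-CNF on $x_1,\dots,x_n$ with $m$ clauses that is quasirandom. Then $\mathrm{suc}\big(\Phi,\lceil\exp(n/k^2)\rceil\big)\leq \exp(-n/k^2)$.
   Context: Let $\Phi=\Phi_1\wedge\dots\wedge\Phi_m$ be a $k$-CNF on $x_1,\dots,x_n$, with clauses $\Phi_i=\Phi_{i1}\vee\dots\vee\Phi_{ik}$; for a literal $l$, $|l|$ is its underlying variable. Set $\rho=2^{-k}m/n$ and $\kappa=\ln k/k$. For $\sigma\in\{0,1\}^n$, $U_\Phi(\sigma)$ is the set of indices of clauses unsatisfied by $\sigma$ and $\mathcal U_\Phi(\sigma)=|U_\Phi(\sigma)|$. $T(\Phi)=\{\tau\in\{0,1\}^n:\mathcal U_\Phi(\tau)\le n\rho/10\}$. $\mathrm{dist}$ is Hamming distance, and $\Delta(\sigma,\tau)=\{x: \sigma(x)\ne\tau(x)\}$. For $r_1,r_2\ge0$, $\mathcal D_\sigma(r_1,r_2)=\{\tau\in\{0,1\}^n:\lfloor r_1\kappa n\rfloor\le \mathrm{dist}(\sigma,\tau)\le\lfloor r_2\kappa n\rfloor\}$. For $W\subseteq\{x_1,\dots,x_n\}$, $X_\Phi(W,\sigma)=\sum_{i\in U_\Phi(\sigma)}\sum_{j\in[k]}\mathbf 1\{|\Phi_{ij}|\in W\}$. A mist of $\Phi$ is a set $\mathcal M\subseteq T(\Phi)$ such that (MI1) distinct elements of $\mathcal M$ have Hamming distance at least $2\kappa n$, and (MI2) for every $\sigma\in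 T(\Phi)$ there is $\mu\in\mathcal M$ with $\mathrm{dist}(\mu,\sigma)\le 2\kappa n$. Let $\mathcal D(\Phi,\mathcal M)=\bigcup_{\sigma\in\mathcal M}\mathcal D_\sigma(0,10)$. $\Phi$ is quasirandom if there is a mist $\mathcal M$ with: (Q1) $|\mathcal D(\Phi,\mathcal M)|\le 2^n\exp(-2n/k^2)$; (Q2) for every $\tau\in\{0,1\}^n$, $|\mathcal M\cap\mathcal D_\tau(0,10)|\le k$; (Q3) for every $\mu\in\mathcal M$ and every $\sigma\in\mathcal D_\mu(0,100)\setminus T(\Phi)$, $X_\Phi(\Delta(\mu,\sigma),\sigma)\le k\,\mathcal U_\Phi(\sigma)/10$. Walksat$(\Phi,\omega)$: choose $\sigma^{[0]}$ uniformly at random; for $i=0,\dots,\omega$, if $\sigma^{[i]}$ satisfies $\Phi$ output it and halt, else pick $i'\in U_\Phi(\sigma^{[i]})$ and $j\in[k]$ uniformly at random and flip the variable $|\Phi_{i'j}|$ to get $\sigma^{[i+1]}$; otherwise output failure. $\mathrm{suc}(\Phi,\omega)$ is the probability over the algorithm's randomness that it finds a satisfying assignment. *)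

(* Defs.v *)
From mathcomp Require Import all_boot.
From Stdlib Require Import Reals ZArith.

Set Implicit Arguments.
Unset Strict Implicit.
Unset Printing Implicit Defensive.

(* Variables x_1..x_n are the elements of 'I_n.
   A literal is a pair (variable, sign); the literal (x, b) is true under
   sigma iff sigma x = b.  An assignment is sigma : {0,1}^n. *)
Definition assignment (n : nat) := {ffun 'I_n -> bool}.
Definition literal (n : nat) := ('I_n * bool)%type.
Definition lvar (n : nat) (l : literal n) : 'I_n := l.1.
Definition lit_true (n : nat) (s : assignment n) (l : literal n) : bool :=
  s (lvar l) == l.2.

Definition kcnf (n k m : nat) := {ffun 'I_m -> {ffun 'I_k -> literal n}}.

Section Defs.
Variables (n k m : nat) (Phi : kcnf n k m).

Definition clause_sat (s : assignment n) (i : 'I_m) : bool :=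
  [exists j : 'I_k, lit_true s (Phi i j)].

Definition Uset (s : assignment n) : {set 'I_m} :=
  [set i | ~~ clause_sat s i].
Definition Ucnt (s : assignment n) : nat := #|Uset s|.

Definition satisfies (s : assignment n) : bool := Ucnt s == 0.

Definition rho : R := (INR m / (2 ^ k * INR n))%R.
Definition kappa : R := (ln (INR k) / INR k)%R.

Definition inT (t : assignment n) : Prop :=
  (INR (Ucnt t) <= INR n * rho / 10)%R.

Definition Delta (s t : assignment n) : {set 'I_n} := [set x | s x != t x].
Definition dist (s t : assignment n) : nat := #|Delta s t|.

Definition inD (s : assignment n) (r1 r2 : R) (t : assignment n) : bool :=
  ((Int_part (r1 * kappa * INR n) <=? Z.of_nat (dist s t))
   && (Z.of_nat (dist s t) <=? Int_part (r2 * kappa * INR n)))%Z.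

Definition Xcnt (W : {set 'I_n}) (s : assignment n) : nat :=
  \sum_(i in Uset s) \sum_(j < k) (lvar (Phi i j) \in W).

Definition is_mist (M : {set assignment n}) : Prop :=
  (forall mu, mu \in M -> inT mu) /\
  (forall mu nu, mu \in M -> nu \in M -> mu <> nu ->
     (2 * kappa * INR n <= INR (dist mu nu))%R) /\
  (forall s, inT s -> exists2 mu, mu \in M &
     (INR (dist mu s) <= 2 * kappa * INR n)%R).

Definition DPhiM (M : {set assignment n}) : {set assignment n} :=
  [set t | [exists s in M, inD s 0 10 t]].

Definition quasirandom : Prop :=
  exists M : {set assignment n},
    is_mist M /\
    (INR #|DPhiM M| <= 2 ^ n * exp (- (2 * INR n / (INR k ^ 2))))%R /\
    (forall t : assignment n, #|[set mu in M | inD t 0 10 mu]| <= k) /\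
    (forall mu s, mu \in M -> inD mu 0 100 s -> ~ inT s ->
       (INR (Xcnt (Delta mu s) s) <= INR k * INR (Ucnt s) / 10)%R).

Definition flip (s : assignment n) (x : 'I_n) : assignment n :=
  [ffun y => if y == x then ~~ s y else s y].

(* walk_succ r s: probability that Walksat, started in the current
   assignment s with r flips still allowed, outputs a satisfying assignment.
   Each step picks i' in U uniformly and j in [k] uniformly, i.e. the pair
   (i', j) uniformly among the |U| * k pairs. *)
Fixpoint walk_succ (r : nat) (s : assignment n) : R :=
  if satisfies s then 1%R else
  match r with
  | 0 => 0%R
  | r'.+1 =>
      (/ (INR (Ucnt s) * INR k) *
       \big[Rplus/0%R]_(i in Uset s) \big[Rplus/0%R]_(j < k)
          walk_succ r' (flip s (lvar (Phi i j))))%R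
  end.

(* suc(Phi, omega): iterations i = 0..omega check sigma^[0..omega], so at
   most omega flips are performed; sigma^[0] is uniform on {0,1}^n. *)
Definition suc (omega : nat) : R :=
  (/ 2 ^ n * \big[Rplus/0%R]_(s : assignment n) walk_succ omega s)%R.

End Defs.

(* ceiling of a real, as a natural number (for nonnegative arguments) *)
Definition ceil_nat (x : R) : nat := Z.to_nat (- Int_part (- x))%Z.

(* Main.v *)
Require Import Defs.
From HB Require Import structures.
From mathcomp Require Import all_boot.
From Stdlib Require Import Reals ZArith Lra Lia Classical.
Open Scope R_scope.
HB.instance Definition _ := Monoid.isComLaw.Build R 0%R Rplus (fun a b c => esym (Rplus_assoc a b c)) Rplus_comm Rplus_0_l.

Lemma sumR_le (I : finType) (P : pred I) (F G : I -> R) :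
  (forall i, P i -> F i <= G i) ->
  \big[Rplus/0]_(i | P i) F i <= \big[Rplus/0]_(i | P i) G i.
Proof.
move=> H; apply: (big_ind2 (fun x y => x <= y)) => //; first lra.
move=> *; lra.
Qed.

Lemma sumR_scale (I : finType) (P : pred I) (F : I -> R) c :
  \big[Rplus/0]_(i | P i) (c * F i) = c * \big[Rplus/0]_(i | P i) F i.
Proof.
apply: (big_rec2 (fun x y => x = c * y)); first lra.
by move=> i y1 y2 _ ->; ring.
Qed.

Lemma sumR_const (I : finType) (A : {pred I}) c :
  \big[Rplus/0]_(i in A) c = INR #|A| * c.
Proof.
rewrite big_const; elim: #|A| => [|n IH]; first (simpl; lra).
rewrite iterS IH S_INR; ring.
Qed.

Lemma sumR_split (I : finType) (P : pred I) (F G : I -> R) :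
  \big[Rplus/0]_(i | P i) (F i + G i) = \big[Rplus/0]_(i | P i) F i + \big[Rplus/0]_(i | P i) G i.
Proof. exact: big_split. Qed.

Lemma sumR_ge0 (I : finType) (P : pred I) (F : I -> R) :
  (forall i, P i -> 0 <= F i) -> 0 <= \big[Rplus/0]_(i | P i) F i.
Proof. move=> H; apply: (big_ind (fun x => 0 <= x)) => //; [lra| move=>*; lra]. Qed.

Lemma INR_sum (I : finType) (P : pred I) (F : I -> nat) :
  INR (\sum_(i | P i) F i) = \big[Rplus/0]_(i | P i) INR (F i).
Proof. apply: (big_morph INR) => //; exact: plus_INR. Qed.

Notation DL := Defs.Delta.
Notation DS := Defs.dist.

Lemma Delta_sym n (s t : assignment n) : DL s t = DL t s.
Proof. by apply/setP=> x; rewrite !inE eq_sym. Qed.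

Lemma dist_sym n (s t : assignment n) : DS s t = DS t s.
Proof. by rewrite /DS /Defs.dist Delta_sym. Qed.

Lemma Delta_flip n (mu s : assignment n) x :
  DL mu (flip s x) = if x \in DL mu s then DL mu s :\ x else x |: DL mu s.
Proof.
apply/setP=> y; rewrite /flip; case: ifP => Hx; rewrite !inE ffunE;
 case: (eqVneq y x) => [->|Hyx] //=; move: Hx; rewrite inE.
- by case: (mu x); case: (s x).
- by case: (mu x); case: (s x).
Qed.

Lemma dist_flip n (mu s : assignment n) x :
  DS mu (flip s x) = if x \in DL mu s then (DS mu s).-1 else (DS mu s).+1.
Proof.
rewrite /DS /Defs.dist Delta_flip; case: ifP => Hx.
- by rewrite (cardsD1 x (DL mu s)) Hx.
- by rewrite cardsU1 Hx.
Qed.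

Lemma sumR_constT (I : finType) c :
  \big[Rplus/0]_(i : I) c = INR #|I| * c.
Proof.
rewrite big_const; elim: #|I| => [|n IH]; first (simpl; lra).
rewrite iterS IH S_INR; ring.
Qed.

Definition hval (c N d : nat) : R := if leq d.+1 N then 2 ^ c / 2 ^ d else 0.

Lemma hval_ge0 c N d : 0 <= hval c N d.
Proof.
rewrite /hval; case: ifP => _; last lra.
apply: Rle_mult_inv_pos; apply: pow_le || apply: pow_lt; lra.
Qed.

Lemma hval_S c N d : hval c N d.+1 <= hval c N d / 2.
Proof.
rewrite /hval; case: (ltnP d.+1 N) => H.
- rewrite (ltn_trans (ltnSn d) H) /= ; right; field; apply: pow_nonzero; lra.
- case: ifP => _; last lra.
  apply: Rmult_le_pos; last lra.
  apply: Rle_mult_inv_pos; apply: pow_le || apply: pow_lt; lra.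
Qed.

Lemma hval_P c N d :
  hval c N d.-1 <= 2 * hval c N d + (if d == N then 2 * (2 ^ c / 2 ^ N) else 0).
Proof.
have h0 := hval_ge0 c N d.
have hp : 0 <= 2 ^ c / 2 ^ N.
  apply: Rle_mult_inv_pos; apply: pow_le || apply: pow_lt; lra.
case: d h0 => [|d] h0 /=.
  case: ifP => _; lra.
rewrite /hval; case: (ltnP d.+1 N) => H.
- rewrite (ltn_trans (ltnSn d) H) (ltn_eqF H) /=.
  have : 2 ^ c / 2 ^ d = 2 * (2 ^ c / (2 * 2 ^ d)) by field; apply: pow_nonzero; lra.
  lra.
- case: (eqVneq d.+1 N) => [<-|HN].
  + rewrite ltnSn /=; right; field; apply: pow_nonzero; lra.
  + have : (N < d.+1)%coq_nat. apply/ltP; by rewrite ltn_neqAle eq_sym HN H.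
    move=> /ltP H'.
    have -> : leq d.+1 N = false by apply/negbTE; rewrite -ltnNge.
    lra.
Qed.

Lemma hval_big c N d : leq N d -> hval c N d = 0.
Proof. by move=> H; rewrite /hval leqNgt ltnS H. Qed.

Lemma permu n k m (Phi : kcnf n k m) (mu s : assignment n) c N :
  (leq (DS mu s) N -> INR (Xcnt Phi (DL mu s) s) <= INR k * INR (Ucnt Phi s) / 10) ->
  \big[Rplus/0]_(i in Uset Phi s) \big[Rplus/0]_(j < k)
      hval c N (DS mu (flip s (lvar (Phi i j))))
  <= INR (Ucnt Phi s) * INR k *
     (hval c N (DS mu s) + (if DS mu s == N then 2 ^ c / 2 ^ N else 0)).
Proof.
move=> HQ.
set d := DS mu s.
set A := hval c N d.-1.
set B := hval c N d.+1.
set X := INR (Xcnt Phi (DL mu s) s).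
have E : \big[Rplus/0]_(i in Uset Phi s) \big[Rplus/0]_(j < k)
      hval c N (DS mu (flip s (lvar (Phi i j))))
    = INR (Ucnt Phi s) * (INR k * B) + (A - B) * X.
  rewrite /X /Xcnt INR_sum -(sumR_scale _ _ _ (A - B)) /Ucnt.
  rewrite -(sumR_const _ (Uset Phi s) (INR k * B)) -sumR_split.
  apply: eq_bigr => i _.
  rewrite INR_sum -(sumR_scale _ _ _ (A - B)) -/B.
  have -> : INR k * B = INR #|'I_k| * B by rewrite card_ord.
  rewrite -(sumR_constT _ B) -sumR_split.
  apply: eq_bigr => j _.
  rewrite dist_flip -/d; case: (lvar (Phi i j) \in DL mu s) => /=; rewrite /A /B; ring.
rewrite E.
have hK : 0 <= INR (Ucnt Phi s) * INR k by apply: Rmult_le_pos; apply: pos_INR.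
set K := INR (Ucnt Phi s) * INR k in hK *.
have hX : 0 <= X by apply: pos_INR.
have hh := hval_ge0 c N d.
set h := hval c N d in hh *.
have hp : 0 <= 2 ^ c / 2 ^ N.
  apply: Rle_mult_inv_pos; apply: pow_le || apply: pow_lt; lra.
set e := (if d == N then 2 ^ c / 2 ^ N else 0).
have he : 0 <= e by rewrite /e; case: ifP => _; lra.
case: (leqP d N) => Hd.
- have HX : X <= K / 10 by rewrite /K; move: (HQ Hd); rewrite /X; lra.
  have hA : A <= 2 * h + 2 * e.
    rewrite /A /h /e; move: (hval_P c N d); case: ifP => _; lra.
  have hB : B <= h / 2 by apply: hval_S.
  have hB0 : 0 <= B by apply: hval_ge0.
  have p1 : 0 <= (h / 2 - B) * (K - X) by apply: Rmult_le_pos; lra.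
  have p2 : 0 <= (2 * h + 2 * e - A) * X by apply: Rmult_le_pos; lra.
  have p3 : 0 <= h * (K / 10 - X) by apply: Rmult_le_pos; lra.
  have p4 : 0 <= e * (K / 10 - X) by apply: Rmult_le_pos; lra.
  have p5 : 0 <= e * K by apply: Rmult_le_pos; lra.
  have p6 : 0 <= h * K by apply: Rmult_le_pos; lra.
  have -> : INR (Ucnt Phi s) * (INR k * B) + (A - B) * X = B * (K - X) + A * X
    by rewrite /K; ring.
  lra.
- have hA : A = 0 by rewrite /A; apply: hval_big; rewrite -ltnS (ltn_predK Hd).
  have hB : B = 0 by rewrite /B; apply: hval_big; apply: ltnW; apply: ltnW.
  rewrite hA hB -/K.
  have : 0 <= K * (h + e) by apply: Rmult_le_pos; lra.
  lra.
Qed.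

Definition Hs n (M : {set assignment n}) c N (s : assignment n) : R :=
  \big[Rplus/0]_(mu in M) hval c N (DS mu s).
Arguments Hs {n}.

Lemma Hs_ge0 n (M : {set assignment n}) c N s : 0 <= Hs M c N s.
Proof. by apply: sumR_ge0 => mu _; apply: hval_ge0. Qed.

Lemma Hs_step n k m (Phi : kcnf n k m) (M : {set assignment n}) c N s :
  (forall mu, mu \in M -> leq (DS mu s) N ->
      INR (Xcnt Phi (DL mu s) s) <= INR k * INR (Ucnt Phi s) / 10) ->
  leq #|[set mu in M | DS mu s == N]| k ->
  \big[Rplus/0]_(i in Uset Phi s) \big[Rplus/0]_(j < k)
      Hs M c N (flip s (lvar (Phi i j)))
  <= INR (Ucnt Phi s) * INR k * (Hs M c N s + INR k * (2 ^ c / 2 ^ N)).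
Proof.
move=> HQ3 HQ2.
rewrite /Hs.
have -> : \big[Rplus/0]_(i in Uset Phi s) \big[Rplus/0]_(j < k)
      \big[Rplus/0]_(mu in M) hval c N (DS mu (flip s (lvar (Phi i j))))
  = \big[Rplus/0]_(mu in M) \big[Rplus/0]_(i in Uset Phi s) \big[Rplus/0]_(j < k)
       hval c N (DS mu (flip s (lvar (Phi i j)))).
  rewrite [in RHS]exchange_big /=; apply: eq_bigr => i _.
  by rewrite exchange_big.
apply: Rle_trans.
  apply: sumR_le => mu Hmu; apply: permu; exact: HQ3.
rewrite sumR_scale sumR_split.
apply: Rmult_le_compat_l.
  by apply: Rmult_le_pos; apply: pos_INR.
apply: Rplus_le_compat_l.
rewrite -big_mkcondr /=.
have -> : \big[Rplus/0]_(i in M | DS i s == N) (2 ^ c / 2 ^ N)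
   = \big[Rplus/0]_(i in [set mu in M | DS mu s == N]) (2 ^ c / 2 ^ N).
  by apply: eq_bigl => mu; rewrite inE.
rewrite sumR_const.
have hp : 0 <= 2 ^ c / 2 ^ N.
  apply: Rle_mult_inv_pos; apply: pow_le || apply: pow_lt; lra.
apply: Rmult_le_compat_r => //.
by apply: le_INR; apply/leP.
Qed.

Definition Pot n (M : {set assignment n}) c N s := Rmin 1 (Hs M c N s).
Arguments Pot {n}.

Lemma sum2_const n k m (Phi : kcnf n k m) s (x : R) :
  \big[Rplus/0]_(i in Uset Phi s) \big[Rplus/0]_(j < k) x
  = INR (Ucnt Phi s) * INR k * x.
Proof.
under eq_bigr => i _ do rewrite sumR_constT card_ord.
by rewrite sumR_const Rmult_assoc.
Qed.

Lemma sum_single (T : finType) (A : {pred T}) (F : T -> R) x :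
  (forall y, 0 <= F y) -> x \in A -> F x <= \big[Rplus/0]_(y in A) F y.
Proof.
move=> H Hx; rewrite (bigD1 x) //=.
have : 0 <= \big[Rplus/0]_(i in A | i != x) F i by apply: sumR_ge0.
lra.
Qed.

Lemma inT_sat n k m (Phi : kcnf n k m) s : satisfies Phi s -> inT Phi s.
Proof.
rewrite /satisfies /inT => /eqP ->; rewrite /rho /=.
case: n Phi s => [|n] Phi s; first (simpl; lra).
have : 0 < INR n.+1 by apply: lt_0_INR; apply/ltP.
move=> Hn.
have : 0 <= INR m / (2 ^ k * INR n.+1).
  apply: Rle_mult_inv_pos; first exact: pos_INR.
  apply: Rmult_lt_0_compat => //; apply: pow_lt; lra.
move=> H; have := Rmult_le_pos _ _ (Rlt_le _ _ Hn) H; lra.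
Qed.

Lemma walk_bound n k m (Phi : kcnf n k m) (M : {set assignment n}) c N :
  leq 1 k ->
  (forall s, inT Phi s -> exists2 mu, mu \in M & leq (DS mu s) c) ->
  leq c.+1 N ->
  (forall mu s, mu \in M -> leq (DS mu s) N -> ~ inT Phi s ->
      INR (Xcnt Phi (DL mu s) s) <= INR k * INR (Ucnt Phi s) / 10) ->
  (forall s, leq #|[set mu in M | DS mu s == N]| k) ->
  forall r s, walk_succ Phi r s <= Pot M c N s + INR r * (INR k * (2 ^ c / 2 ^ N)).
Proof.
move=> Hk HT HcN HQ3 HQ2.
have hp : 0 <= 2 ^ c / 2 ^ N.
  apply: Rle_mult_inv_pos; apply: pow_le || apply: pow_lt; lra.
set eps := 2 ^ c / 2 ^ N in hp *.
have hd : 0 <= INR k * eps by apply: Rmult_le_pos => //; apply: pos_INR.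
set del := INR k * eps in hd *.
have PotT : forall s, inT Phi s -> Pot M c N s = 1.
  move=> s /HT [mu Hmu Hd].
  have : 1 <= Hs M c N s.
    apply: Rle_trans (sum_single _ _ _ _ _ Hmu); last by move=> y; apply: hval_ge0.
    rewrite /hval (leq_ltn_trans Hd HcN).
    have : 2 ^ DS mu s <= 2 ^ c by apply: Rle_pow; [lra | apply/leP].
    have : 0 < 2 ^ DS mu s by apply: pow_lt; lra.
    move=> h1 h2.
    apply: (Rmult_le_reg_r (2 ^ DS mu s)) => //.
    rewrite /Rdiv Rmult_assoc Rinv_l; lra.
  rewrite /Pot /Rmin; case: Rle_dec => //; lra.
have Pot01 : forall s, 0 <= Pot M c N s <= 1.
  move=> s; rewrite /Pot /Rmin; have := Hs_ge0 _ M c N s.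
  case: Rle_dec; lra.
elim=> [|r IH] s.
  rewrite /=; case: ifP => Hs.
  - rewrite PotT; [lra | exact: inT_sat].
  - have := Pot01 s; lra.
rewrite S_INR /=; case: ifP => Hsat.
  rewrite PotT; [|exact: inT_sat].
  have : 0 <= (INR r + 1) * del by apply: Rmult_le_pos => //; have := pos_INR r; lra.
  lra.
have HU : 0 < INR (Ucnt Phi s) * INR k.
  apply: Rmult_lt_0_compat; apply: lt_0_INR; apply/ltP => //.
  by rewrite lt0n; move: Hsat; rewrite /satisfies => ->.
set K := INR (Ucnt Phi s) * INR k in HU *.
apply: (Rle_trans _ (/ K * \big[Rplus/0]_(i in Uset Phi s) \big[Rplus/0]_(j < k)
    (Pot M c N (flip s (lvar (Phi i j))) + INR r * del))).
  apply: Rmult_le_compat_l; first (apply: Rlt_le; exact: Rinv_0_lt_compat).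
  apply: sumR_le => i _; apply: sumR_le => j _; exact: IH.
have -> : \big[Rplus/0]_(i in Uset Phi s) \big[Rplus/0]_(j < k)
    (Pot M c N (flip s (lvar (Phi i j))) + INR r * del)
  = \big[Rplus/0]_(i in Uset Phi s) \big[Rplus/0]_(j < k)
    Pot M c N (flip s (lvar (Phi i j))) + K * (INR r * del).
  under eq_bigr => i _ do rewrite sumR_split.
  by rewrite sumR_split sum2_const.
set S := \big[Rplus/0]_(i in Uset Phi s) \big[Rplus/0]_(j < k)
    Pot M c N (flip s (lvar (Phi i j))).
have HS1 : S <= K.
  rewrite /S /K -(Rmult_1_r (INR _ * INR _)) -sum2_const.
  apply: sumR_le => i _; apply: sumR_le => j _; have := Pot01 (flip s (lvar (Phi i j))); lra.
have E2 : / K * (S + K * (INR r * del)) = / K * S + INR r * del by field; lra.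
rewrite E2.
have HS0 : 0 <= S by apply: sumR_ge0 => i _; apply: sumR_ge0 => j _; have := Pot01 (flip s (lvar (Phi i j))); lra.
have HK1 : / K * S <= 1.
  apply: (Rmult_le_reg_l K) => //; rewrite -Rmult_assoc Rinv_r; lra.
case: (classic (inT Phi s)) => HTs.
  rewrite PotT //; lra.
have HS2 : S <= K * (Hs M c N s + del).
  apply: Rle_trans (Hs_step _ _ _ _ _ _ _ _ _ (HQ2 s)).
  - apply: sumR_le => i _; apply: sumR_le => j _; rewrite /Pot; exact: Rmin_r.
  - move=> mu Hmu HdN; exact: HQ3.
have HK2 : / K * S <= Hs M c N s + del.
  apply: (Rmult_le_reg_l K) => //; rewrite -Rmult_assoc Rinv_r; lra.
rewrite /Pot /Rmin; case: Rle_dec => _; lra.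
Qed.

Lemma INR_expn2 n : INR (expn 2 n) = 2 ^ n.
Proof.
elim: n => [|n IH]; first by rewrite expn0.
by rewrite expnS mult_INR IH /=.
Qed.

Lemma card_assign n : INR #|{: assignment n}| = 2 ^ n.
Proof. by rewrite card_ffun card_bool card_ord INR_expn2. Qed.

Lemma suc_bound n k m (Phi : kcnf n k m) (M : {set assignment n}) c N om :
  leq 1 k ->
  (forall s, inT Phi s -> exists2 mu, mu \in M & leq (DS mu s) c) ->
  leq c.+1 N ->
  (forall mu s, mu \in M -> leq (DS mu s) N -> ~ inT Phi s ->
      INR (Xcnt Phi (DL mu s) s) <= INR k * INR (Ucnt Phi s) / 10) ->
  (forall s, leq #|[set mu in M | DS mu s == N]| k) ->
  suc Phi om <= INR #|[set s | [exists mu in M, leq (DS mu s).+1 N]]| / 2 ^ n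
                + INR om * (INR k * (2 ^ c / 2 ^ N)).
Proof.
move=> Hk HT HcN HQ3 HQ2.
have W := walk_bound _ _ _ Phi M c N Hk HT HcN HQ3 HQ2 om.
set D := [set s | [exists mu in M, leq (DS mu s).+1 N]].
set del := INR om * (INR k * (2 ^ c / 2 ^ N)).
have h2 : 0 < 2 ^ n by apply: pow_lt; lra.
rewrite /suc.
apply: Rle_trans.
  apply: Rmult_le_compat_l; first (apply: Rlt_le; exact: Rinv_0_lt_compat).
  apply: sumR_le => s _; exact: W.
rewrite sumR_split sumR_constT card_assign.
have HP : \big[Rplus/0]_(s : assignment n) Pot M c N s <= INR #|D|.
  apply: (Rle_trans _ (\big[Rplus/0]_(s : assignment n) (if s \in D then 1 else 0))).
    apply: sumR_le => s _; case: ifP => HsD.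
      rewrite /Pot; exact: Rmin_l.
    rewrite /Pot.
    have -> : Hs M c N s = 0.
      rewrite /Hs big1 // => mu Hmu; apply: hval_big.
      move: HsD; rewrite /D inE => /negbT; rewrite negb_exists => /forallP /(_ mu).
      by rewrite Hmu /= -ltnNge.
    rewrite /Rmin; case: Rle_dec; lra.
  rewrite -big_mkcond /= sumR_const Rmult_1_r; exact: Rle_refl.
rewrite -/del.
have -> : / 2 ^ n * (\big[Rplus/0]_(s : assignment n) Pot M c N s + 2 ^ n * del)
   = / 2 ^ n * \big[Rplus/0]_(s : assignment n) Pot M c N s + del by field; lra.
rewrite /Rdiv Rmult_comm.
apply: Rplus_le_compat_r; apply: Rmult_le_compat_r => //.
apply: Rlt_le; exact: Rinv_0_lt_compat.
Qed.

Lemma exp_le x y : x <= y -> exp x <= exp y.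
Proof. case=> [H|->]; [apply: Rlt_le; exact: exp_increasing | lra]. Qed.

Lemma ln_le x y : 0 < x -> x <= y -> ln x <= ln y.
Proof. move=> Hx [H|->]; [apply: Rlt_le; exact: ln_increasing | lra]. Qed.

Lemma pow2_exp (c : nat) : 2 ^ c = exp (INR c * ln 2).
Proof. rewrite -ln_pow; [rewrite exp_ln //; apply: pow_lt | ]; lra. Qed.

Lemma ln2_le1 : ln 2 <= 1.
Proof.
rewrite -(ln_exp 1); apply: ln_le; first lra.
have := exp_ineq1_le 1; lra.
Qed.

Lemma ratio_bound (c N : nat) t :
  INR c <= 2 * t -> 10 * t - 1 <= INR N -> 0 <= t -> 2 ^ c / 2 ^ N <= exp (1 - 4 * t).
Proof.
move=> Hc HN Ht.
rewrite !pow2_exp /Rdiv -exp_Ropp -exp_plus; apply: exp_le.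
have h1 := ln_lt_2; have h2 := ln2_le1.
have : (INR c - INR N) * ln 2 <= (1 - 8 * t) * ln 2.
  apply: Rmult_le_compat_r; lra.
nra.
Qed.

Lemma final_real (K n a t w : R) (c N : nat) :
  3 <= K -> a = n / K ^ 2 -> K * a <= t -> K <= a -> 0 <= w <= exp a + 1 ->
  INR c <= 2 * t -> 10 * t - 1 <= INR N ->
  exp (- (2 * n / K ^ 2)) + w * (K * (2 ^ c / 2 ^ N)) <= exp (- (n / K ^ 2)).
Proof.
move=> HK Ha Ht HKa Hw Hc HN.
have Ha0 : 3 <= a by lra.
have Ht0 : 0 <= t by nra.
have E1 : 2 * n / K ^ 2 = 2 * a by rewrite Ha; field; lra.
rewrite E1 -Ha.
have Hr := ratio_bound c N t Hc HN Ht0.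
have Hea : 1 <= exp a by have := exp_ineq1_le a; lra.
have HeK : K <= exp K by have := exp_ineq1_le K; lra.
have Hp : 0 <= 2 ^ c / 2 ^ N.
  apply: Rle_mult_inv_pos; apply: pow_le || apply: pow_lt; lra.
have S1 : w * (K * (2 ^ c / 2 ^ N)) <= (2 * exp a) * (exp K * exp (1 - 4 * t)).
  apply: Rmult_le_compat; try lra.
    apply: Rmult_le_pos; lra.
  apply: Rmult_le_compat; lra.
have E2 : (2 * exp a) * (exp K * exp (1 - 4 * t)) = 2 * exp (a + K + (1 - 4 * t)).
  by rewrite !exp_plus; ring.
have S2 : exp (a + K + (1 - 4 * t)) <= exp (- a) * exp (1 - 9 * a).
  rewrite -exp_plus; apply: exp_le.
  have : 3 * a <= K * a by apply: Rmult_le_compat_r; lra.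
  lra.
have E3 : exp (Ropp 3) <= / 4.
  rewrite exp_Ropp.
  have : 4 <= exp 3 by have := exp_ineq1_le 3; lra.
  move=> H4; apply: Rinv_le_contravar; lra.
have S3 : exp (1 - 9 * a) <= / 4.
  have : exp (1 - 9 * a) <= exp (Ropp 3) by apply: exp_le; lra.
  lra.
have S4 : exp (- (2 * a)) = exp (- a) * exp (- a) by rewrite -exp_plus; f_equal; ring.
have S5 : exp (- a) <= / 4.
  have : exp (- a) <= exp (Ropp 3) by apply: exp_le; lra.
  lra.
have ha := exp_pos (- a).
have h9 := exp_pos (1 - 9 * a).
rewrite S4.
have : exp (- a) * exp (- a) <= exp (- a) * / 4 by apply: Rmult_le_compat_l; lra.
have : exp (- a) * exp (1 - 9 * a) <= exp (- a) * / 4 by apply: Rmult_le_compat_l; lra.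
lra.
Qed.

Lemma floor_ge (d : nat) x : INR d <= x -> leq d (Z.to_nat (Int_part x)).
Proof.
move=> H; have [h1 h2] := base_Int_part x.
have : (Z.of_nat d - 1 < Int_part x)%Z.
  apply: lt_IZR; rewrite minus_IZR -INR_IZR_INZ; lra.
move=> Hz; apply/leP; lia.
Qed.

Lemma Int_part_mono x y : x <= y -> (Int_part x <= Int_part y)%Z.
Proof.
move=> H; have [h1 h2] := base_Int_part x; have [h3 h4] := base_Int_part y.
have : (Int_part x < Int_part y + 1)%Z.
  apply: lt_IZR; rewrite plus_IZR; lra.
lia.
Qed.

Lemma Int_part_nonneg x : 0 <= x -> (0 <= Int_part x)%Z.
Proof.
move=> H; have [h1 h2] := base_Int_part x.
have : (-1 < Int_part x)%Z by apply: lt_IZR; lra.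
lia.
Qed.

Lemma Int_part_0 : (Int_part 0 <= 0)%Z.
Proof. have [h1 h2] := base_Int_part 0; apply: le_IZR; lra. Qed.

Lemma INR_toZ z : (0 <= z)%Z -> INR (Z.to_nat z) = IZR z.
Proof. by move=> H; rewrite INR_IZR_INZ Z2Nat.id. Qed.

Lemma ceil_bound x : 0 <= x -> INR (ceil_nat x) <= x + 1.
Proof.
move=> Hx0; rewrite /ceil_nat; have [h1 h2] := base_Int_part (- x).
case: (Z_lt_le_dec (- Int_part (- x)) 0) => Hz.
  have -> : Z.to_nat (- Int_part (- x)) = 0%nat by lia.
  rewrite /=.
  lra.
rewrite INR_toZ // opp_IZR; lra.
Qed.

Lemma main_aux :
  exists k0 : nat, forall k : nat, leq k0 k ->
  exists n0 : nat, forall n : nat, leq n0 n ->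
  forall (m : nat) (Phi : kcnf n k m),
    quasirandom Phi ->
    (suc Phi (ceil_nat (exp (INR n / INR k ^ 2)))
       <= exp (- (INR n / INR k ^ 2)))%R.
Proof.
exists 3%nat => k Hk; exists (k * k * k)%nat => n Hn m Phi.
move=> [M [[HM1 [HM2 HM3]] [Q1 [Q2 Q3]]]].
have HK : 3 <= INR k by have := le_INR 3 k (elimT leP Hk); rewrite /=; lra.
have HKp : 0 < INR k by lra.
have Hnk : INR k * INR k * INR k <= INR n.
  rewrite -!mult_INR; apply: le_INR; exact/leP.
have Hln : 1 <= ln (INR k).
  rewrite -(ln_exp 1); apply: ln_le; [apply: exp_pos | have := exp_le_3; lra].
have Hkap : 0 <= kappa k by rewrite /kappa; apply: Rle_mult_inv_pos; lra.
set t := kappa k * INR n.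
have Hn0 : 0 <= INR n by apply: pos_INR.
have Ht : INR n / INR k <= t.
  have e1 : INR n / INR k = (1 / INR k) * INR n by field; lra.
  rewrite /t /kappa e1; apply: Rmult_le_compat_r => //; rewrite /Rdiv.
  apply: Rmult_le_compat_r; [apply: Rlt_le; apply: Rinv_0_lt_compat|]; lra.
have Ht0 : 0 <= t by apply: Rmult_le_pos.
set a := INR n / INR k ^ 2.
have Hka : INR k * a = INR n / INR k by rewrite /a; field; lra.
have HKa : INR k <= a.
  rewrite /a; apply: (Rmult_le_reg_r (INR k ^ 2)); first by apply: pow_lt.
  have -> : INR n / INR k ^ 2 * INR k ^ 2 = INR n by field; lra.
  have : INR k * INR k ^ 2 = INR k * INR k * INR k by ring.
  lra.
have Ht9 : 9 <= t.
  have : INR k * INR k <= INR n / INR k.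
    apply: (Rmult_le_reg_r (INR k)) => //.
    have -> : INR n / INR k * INR k = INR n by field; lra.
    lra.
  nra.
have E2 : 2 * kappa k * INR n = 2 * t by rewrite /t; ring.
have E10 : 10 * kappa k * INR n = 10 * t by rewrite /t; ring.
have E100 : 100 * kappa k * INR n = 100 * t by rewrite /t; ring.
set F2 := Int_part (2 * kappa k * INR n).
set F10 := Int_part (10 * kappa k * INR n).
set F100 := Int_part (100 * kappa k * INR n).
have [f2a f2b] := base_Int_part (2 * kappa k * INR n).
have [f10a f10b] := base_Int_part (10 * kappa k * INR n).
rewrite -/F2 E2 in f2a f2b; rewrite -/F10 E10 in f10a f10b.
have F2p : (0 <= F2)%Z by rewrite /F2 E2; apply: Int_part_nonneg; lra.
have F10p : (0 <= F10)%Z by rewrite /F10 E10; apply: Int_part_nonneg; lra.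
have F10F100 : (F10 <= F100)%Z by rewrite /F10 /F100 E10 E100; apply: Int_part_mono; lra.
set c := Z.to_nat F2.
set N := Z.to_nat F10.
have Hc : INR c <= 2 * t by rewrite /c INR_toZ.
have HN : 10 * t - 1 <= INR N by rewrite /N INR_toZ //; lra.
have HcN : leq c.+1 N.
  have : (F2 + 1 < F10)%Z by apply: lt_IZR; rewrite plus_IZR; lra.
  move=> H; apply/leP; rewrite /c /N; lia.
have Hk1 : leq 1 k by apply: leq_trans Hk.
have Z0 : (Int_part (0 * kappa k * INR n) <= 0)%Z by rewrite !Rmult_0_l; exact: Int_part_0.
have HT : forall s, inT Phi s -> exists2 mu, mu \in M & leq (DS mu s) c.
  move=> s /HM3 [mu Hmu Hd]; exists mu => //; rewrite /c /F2; exact: floor_ge.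
have HQ3 : forall mu s, mu \in M -> leq (DS mu s) N -> ~ inT Phi s ->
      INR (Xcnt Phi (DL mu s) s) <= INR k * INR (Ucnt Phi s) / 10.
  move=> mu s Hmu HdN HTs; apply: Q3 => //.
  rewrite /inD; apply/andP; split; apply/Z.leb_le; first lia.
  move/leP: HdN; rewrite -/F100; lia.
have HQ2 : forall s, leq #|[set mu in M | DS mu s == N]| k.
  move=> s; apply: leq_trans (Q2 s); apply: subset_leq_card; apply/subsetP => mu.
  rewrite !inE => /andP [-> /eqP HdN] /=.
  rewrite /inD; apply/andP; split; apply/Z.leb_le; first lia.
  rewrite dist_sym HdN -/F10 /N; lia.
have Hsuc := suc_bound _ _ _ Phi M c N (ceil_nat (exp a)) Hk1 HT HcN HQ3 HQ2.
have HD : leq #|[set s | [exists mu in M, leq (DS mu s).+1 N]]| #|DPhiM k M|.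
  apply: subset_leq_card; apply/subsetP => s; rewrite !inE => /existsP [mu /andP [Hmu Hd]].
  apply/existsP; exists mu; rewrite Hmu /=.
  rewrite /inD; apply/andP; split; apply/Z.leb_le; first lia.
  move/leP: Hd; rewrite -/F10 /N; lia.
have h2n : 0 < 2 ^ n by apply: pow_lt; lra.
have HD2 : INR #|[set s | [exists mu in M, leq (DS mu s).+1 N]]| / 2 ^ n
    <= exp (- (2 * INR n / INR k ^ 2)).
  apply: (Rmult_le_reg_r (2 ^ n)) => //.
  have -> : INR #|[set s | [exists mu in M, leq (DS mu s).+1 N]]| / 2 ^ n * 2 ^ n
     = INR #|[set s | [exists mu in M, leq (DS mu s).+1 N]]| by field; lra.
  apply: Rle_trans (le_INR _ _ (elimT leP HD)) _; lra.
have Hw : 0 <= INR (ceil_nat (exp a)) <= exp a + 1.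
  split; [apply: pos_INR | apply: ceil_bound; apply: Rlt_le; apply: exp_pos].
have Hkat : INR k * a <= t by rewrite Hka.
have Hfin := final_real (INR k) (INR n) a t (INR (ceil_nat (exp a))) c N HK
  (erefl _) Hkat HKa Hw Hc HN.
apply: Rle_trans Hsuc _; rewrite -/a in Hfin; lra.
Qed.

Close Scope R_scope.

Theorem proposition2 :
  exists k0 : nat, forall k : nat, k0 <= k ->
  exists n0 : nat, forall n : nat, n0 <= n ->
  forall (m : nat) (Phi : kcnf n k m),
    quasirandom Phi ->
    (suc Phi (ceil_nat (exp (INR n / INR k ^ 2)))
       <= exp (- (INR n / INR k ^ 2)))%R.
Proof. exact: main_aux. Qed.
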